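(* Let $\Sigma$ be any $(\mathbf d,\mathbf z)$-cluster pattern in a semifield $\mathbb P$ with initial seed $(\mathbf x,\mathbf y,B)$ (here $\mathbf y\in\mathbb P^n$ and $\mathbf z$ have values in $\mathbb P$), with exchange matrices $B_t=(b^t_{ij})$ and $y$-variables $y^t_i$. Let $C^t=(c^t_{ij})$ and $F^t_j$ be the $C$-matrices and $F$-polynomials of the $(\mathbf d,\mathbf z)$-cluster pattern with principal coefficients having the same initial exchange matrix $B$ and the same $\mathbf d$. Then for all $t$ and $i$, $$y^t_i=\prod_{j=1}^ny_j^{c^t_{ji}}\prod_{j=1}^nF^t_j|_{\mathbb P}(\mathbf y,\mathbf z)^{b^t_{ji}}.$$ Moreover, the $Y$-functions satisfy $Y^t_i(\mathbf y,\mathbf z)=\prod_jy_j^{c^t_{ji}}\prod_jF^t_j(\mathbf y,\mathbf z)^{b^t_{ji}}$ as rational functions in the formal variables.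
   Context: All matrices integer and $[a]_+=\max(a,0)$. A semifield $\mathbb P$ is an abelian multiplicative group with a commutative associative $\oplus$ over which multiplication distributes; $\mathbb Z\mathbb P$ its group ring, $\mathbb Q\mathbb P$ its fraction field, $\mathcal F=\mathbb Q\mathbb P(w_1,\dots,w_n)$. A seed in $\mathbb P$ is $(\mathbf x,\mathbf y,B)$ with $B=(b_{ij})$ skew-symmetrizable $n\times n$, $\mathbf x\in\mathcal F^n$, $\mathbf y\in\mathbb P^n$. Mutation data: positive integers $\mathbf d$ and $z_{i,s}\in\mathbb P$ ($1\le s\le d_i-1$) with $z_{i,s}=z_{i,d_i-s}$, $z_{i,0}=z_{i,d_i}=1$. The $(\mathbf d,\mathbf z)$-mutation $\mu_k(\mathbf{x},\mathbf{y},B)=(\mathbf{x}',\mathbf{y}',B')$: $b'_{ij}=-b_{ij}$ if $i=k$ or $j=k$, else $b'_{ij}=b_{ij}+d_k([-b_{ik}]_+b_{kj}+b_{ik}[b_{kj}]_+)$; $y'_k=y_k^{-1}$, $y'_i=y_i(y_k^{[\varepsilon b_{ki}]_+})^{d_k}(\bigoplus_{s=0}^{d_k}z_{k,s}y_k^{\varepsilon s})^{-b_{ki}}$ ($i\ne k$); $x'_i=x_i$ ($i\ne k$), $x'_k=x_k^{-1}(\prod_jx_j^{[-\varepsilon b_{jk}]_+})^{d_k}\frac{\sum_{s=0}^{d_k}z_{k,s}\hat y_k^{\varepsilon s}}{\bigoplus_{s=0}^{d_k}z_{k,s}y_k^{\varepsilon s}}$, $\hat y_i=y_i\prod_jx_j^{b_{ji}}$,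 $\varepsilon=\pm1$. $\mathbb T_n$ is the $n$-regular tree with edges labeled $1,\dots,n$, distinct labels at each vertex; a $(\mathbf d,\mathbf z)$-cluster pattern assigns seeds $(\mathbf x_t,\mathbf y_t,B_t)$, $\mathbf y_t=(y^t_i)$, to vertices related by $\mu_k$ along edges labeled $k$, initial seed at a fixed $t_0$. Principal coefficients: for formal variables $y_1,\dots,y_n$, $z_{i,s}$ ($z_{i,s}=z_{i,d_i-s}$), $\mathrm{Trop}(\mathbf y,\mathbf z)$ is the free abelian group they generate with $\oplus$ the componentwise minimum of exponents; the pattern with principal coefficients lives in $\mathrm{Trop}(\mathbf y,\mathbf z)$ with initial seed $(\mathbf x,\mathbf y,B)$ ($\mathbf y$ the generators). Its $y^t_j$ are Laurent monomials $\prod_iy_i^{c^t_{ij}}$ in $\mathbf y$ alone, defining $C^t=(c^t_{ij})$. Its $x^t_i$ are $X$-functions $X^t_i\in\mathbb Z[x_1^{\pm1},\dots,x_n^{\pm1},\mathbf y,\mathbf z]$, and $F^t_i(\mathbf y,\mathbf z)=X^t_i(1,\dots,1,\mathbf y,\mathbf z)$. Each $F^t_i$ is a subtraction-free rational expression in $\mathbf y,\mathbf z$, so it can be evaluated in any semifield: $F^t_i|_{\mathbb P}(\mathbf y,\mathbf z)$ denotes the value in $\mathbb P$ with $+$ replaced by $\oplus$ and the variables replaced by the given elements of $\mathbb P$. $Y^t_i(\mathbf y,\mathbf z)$ (the $Y$-functions) are the $y$-variables of the $(\mathbf d,\mathbf z)$-cluster pattern with initial seed $(\mathbf x,\mathbf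 y,B)$ in the universal semifield $\mathbb Q_{\mathrm{sf}}(\mathbf y,\mathbf z)$ of subtraction-free rational functions in the formal variables. *)

(* Defs.v *)
From HB Require Import structures.
From mathcomp Require Import all_boot all_order all_algebra.
Set Implicit Arguments. Unset Strict Implicit. Unset Printing Implicit Defensive.
Import Order.TTheory GRing.Theory Num.Theory.
Local Open Scope ring_scope.

Record sfops := SFOps {
  sf_car :> Type;
  sf_mul : sf_car -> sf_car -> sf_car;
  sf_one : sf_car;
  sf_inv : sf_car -> sf_car;
  sf_add : sf_car -> sf_car -> sf_car }.

Record semifield := Semifield {
  sf_ops :> sfops;
  sf_mulA : forall a b c : sf_ops, sf_mul a (sf_mul b c) = sf_mul (sf_mul a b) c;
  sf_mulC : forall a b : sf_ops, sf_mul a b = sf_mul b a;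
  sf_mul1 : forall a : sf_ops, sf_mul (sf_one sf_ops) a = a;
  sf_mulV : forall a : sf_ops, sf_mul (sf_inv a) a = sf_one sf_ops;
  sf_addA : forall a b c : sf_ops, sf_add a (sf_add b c) = sf_add (sf_add a b) c;
  sf_addC : forall a b : sf_ops, sf_add a b = sf_add b a;
  sf_mulDl : forall a b c : sf_ops,
      sf_mul (sf_add a b) c = sf_add (sf_mul a c) (sf_mul b c) }.

Fixpoint sf_pown (O : sfops) (x : O) (m : nat) : O :=
  match m with 0%N => sf_one O | m'.+1 => sf_mul x (sf_pown x m') end.

Definition sf_powz (O : sfops) (x : O) (k : int) : O :=
  match k with Posz m => sf_pown x m | Negz m => sf_inv (sf_pown x m.+1) end.

Definition sf_prod (O : sfops) (n : nat) (f : 'I_n -> O) : O :=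
  foldr (fun i acc => sf_mul (f i) acc) (sf_one O) (enum 'I_n).

(* sf_bigadd f m = f 0 (+) f 1 (+) ... (+) f m  (nonempty, no neutral element) *)
Definition sf_bigadd (O : sfops) (f : nat -> O) (m : nat) : O :=
  foldl (fun acc s => sf_add acc (f s)) (f 0%N) (iota 1 m).

Definition bplus (a : int) : int := if 0 <= a then a else 0.

Definition skew_symmetrizable (n : nat) (B : 'M[int]_n) : Prop :=
  exists D : 'I_n -> nat, (forall i, (0 < D i)%N) /\
    forall i j, (D i)%:Z * B i j = - ((D j)%:Z * B j i).

Definition mutB (n : nat) (d : 'I_n -> nat) (k : 'I_n) (B : 'M[int]_n) : 'M[int]_n :=
  \matrix_(i, j) if (i == k) || (j == k) then - B i j
     else B i j + (d k)%:Z * (bplus (- B i k) * B k j + B i k * bplus (B k j)).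

(* y-mutation with epsilon = +1 (the result is independent of epsilon) *)
Definition mutY (O : sfops) (n : nat) (d : 'I_n -> nat) (z : 'I_n -> nat -> O)
    (k : 'I_n) (B : 'M[int]_n) (y : 'I_n -> O) : 'I_n -> O :=
  fun i => if i == k then sf_inv (y k) else
    sf_mul (sf_mul (y i) (sf_pown (sf_powz (y k) (bplus (B k i))) (d k)))
           (sf_powz (sf_bigadd (fun s => sf_mul (z k s) (sf_pown (y k) s)) (d k))
                    (- B k i)).

(* Vertices of T_n: reduced words in the edge labels, read from t0.
   (y,B)-part of the (d,z)-cluster pattern at the vertex reached by w. *)
Definition reduced_word (n : nat) (w : seq 'I_n) : bool :=
  sorted (fun a b : 'I_n => a != b) w.

Definition ypattern (O : sfops) (n : nat) (d : 'I_n -> nat) (z : 'I_n -> nat -> O)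
    (y : 'I_n -> O) (B : 'M[int]_n) (w : seq 'I_n) : ('I_n -> O) * 'M[int]_n :=
  foldl (fun s k => (mutY d z k s.2 s.1, mutB d k s.2)) (y, B) w.

Definition maxd (n : nat) (d : 'I_n -> nat) : nat := (\max_(i < n) d i)%N.

(* formal variables: y_i, and z_{k,s} with 1 <= s <= d_k - 1 identified with
   z_{k,d_k - s}; the key of z_{k,s} is (k, min(s, d_k - s)). *)
Definition var (n : nat) (d : 'I_n -> nat) : finType :=
  ('I_n + ('I_n * 'I_(maxd d).+1))%type.

Definition trop (n : nat) (d : 'I_n -> nat) := {ffun var d -> int}.

Definition tropOps (n : nat) (d : 'I_n -> nat) : sfops :=
  @SFOps (trop d) (fun a b => [ffun v => a v + b v]) [ffun=> 0]
         (fun a => [ffun v => - a v]) (fun a b => [ffun v => Order.min (a v) (b v)]).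

Definition zkey (n : nat) (d : 'I_n -> nat) (k : 'I_n) (s : nat) : var d :=
  inr (k, inord (minn s (d k - s))).

Definition trop_y (n : nat) (d : 'I_n -> nat) (i : 'I_n) : tropOps d :=
  [ffun v => if v == inl i then 1 else 0].

Definition trop_z (n : nat) (d : 'I_n -> nat) (k : 'I_n) (s : nat) : tropOps d :=
  if (0 < s < d k)%N then [ffun v => if v == zkey d k s then 1 else 0]
  else [ffun=> 0].

Definition trop_mono (O : sfops) (n : nat) (d : 'I_n -> nat) (val : var d -> O)
    (c : trop d) : O :=
  foldr (fun v acc => sf_mul (sf_powz (val v) (c v)) acc) (sf_one O) (enum (var d)).

Inductive sfexpr (A : Type) :=
| SAtom of A | SOne | SMul of sfexpr A & sfexpr A | SInv of sfexpr A
| SAdd of sfexpr A & sfexpr A.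

Definition exprOps (A : Type) : sfops :=
  @SFOps (sfexpr A) (@SMul A) (@SOne A) (@SInv A) (@SAdd A).

Fixpoint sf_eval (A : Type) (O : sfops) (v : A -> O) (e : sfexpr A) : O :=
  match e with
  | SAtom a => v a
  | SOne => sf_one O
  | SMul e1 e2 => sf_mul (sf_eval v e1) (sf_eval v e2)
  | SInv e1 => sf_inv (sf_eval v e1)
  | SAdd e1 e2 => sf_add (sf_eval v e1) (sf_eval v e2)
  end.

(* equality in the universal semifield Q_sf: equality as rational functions,
   tested at all points with positive rational coordinates *)
Definition ratOps : sfops := @SFOps rat *%R 1 GRing.inv +%R.
Definition sf_equiv (A : Type) (e1 e2 : sfexpr A) : Prop :=
  forall v : A -> rat, (forall a, 0 < v a) ->
    sf_eval (O := ratOps) v e1 = sf_eval (O := ratOps) v e2.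

(* atoms of X-expressions: cluster variables x_i and coefficients in Trop *)
Definition patom (n : nat) (d : 'I_n -> nat) := ('I_n + trop d)%type.

Definition pr_mutX (n : nat) (d : 'I_n -> nat) (k : 'I_n) (B : 'M[int]_n)
    (Y : 'I_n -> trop d) (X : 'I_n -> sfexpr (patom d)) : 'I_n -> sfexpr (patom d) :=
  let E := exprOps (patom d) in
  let C (c : trop d) : E := SAtom (inr c) in
  let yhat : E := sf_mul (C (Y k)) (sf_prod (fun j => sf_powz (O := E) (X j) (B j k))) in
  fun i => if i == k then
    sf_mul (sf_mul (sf_mul (sf_inv (s := E) (X k))
        (sf_pown (sf_prod (fun j => sf_powz (O := E) (X j) (bplus (- B j k)))) (d k)))
        (sf_bigadd (fun s => sf_mul (C (trop_z d k s)) (sf_pown yhat s)) (d k)))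
      (sf_inv (C (sf_bigadd (O := tropOps d)
                   (fun s => sf_mul (trop_z d k s) (sf_pown (Y k : tropOps d) s)) (d k))))
  else X i.

Definition prseed (n : nat) (d : 'I_n -> nat) :=
  (('I_n -> sfexpr (patom d)) * ('I_n -> trop d) * 'M[int]_n)%type.

Definition prpattern (n : nat) (d : 'I_n -> nat) (B : 'M[int]_n) (w : seq 'I_n)
    : prseed d :=
  foldl (fun (s : prseed d) k =>
           let: (X, Y, Bt) := s in
           (pr_mutX k Bt Y X,
            mutY (O := tropOps d) d (trop_z d) k Bt Y,
            mutB d k Bt))
        ((fun i => SAtom (inl i)), (fun i => trop_y d i), B) w.

(* C-matrix: c^t_{ij} = exponent of y_i in y^t_j *)
Definition Cmat (n : nat) (d : 'I_n -> nat) (B : 'M[int]_n) (w : seq 'I_n)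
    (i j : 'I_n) : int :=
  (prpattern d B w).1.2 j (inl i).

(* F-polynomial F^t_j = X^t_j(1,...,1,y,z), as a subtraction-free expression
   whose atoms are Laurent monomials in y,z *)
Definition Fpoly (n : nat) (d : 'I_n -> nat) (B : 'M[int]_n) (w : seq 'I_n)
    (j : 'I_n) : sfexpr (trop d) :=
  sf_eval (O := exprOps (trop d))
    (fun a : patom d => match a with inl _ => SOne _ | inr c => SAtom c end)
    ((prpattern d B w).1.1 j).

Definition Feval (P : sfops) (n : nat) (d : 'I_n -> nat) (val : var d -> P)
    (F : sfexpr (trop d)) : P :=
  sf_eval (trop_mono val) F.

Definition Pval (P : sfops) (n : nat) (d : 'I_n -> nat) (y : 'I_n -> P)
    (z : 'I_n -> nat -> P) (v : var d) : P :=
  match v with inl i => y i | inr (k, s) => z k (val s) end.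

Definition ugen_z (n : nat) (d : 'I_n -> nat) (k : 'I_n) (s : nat) : exprOps (var d) :=
  if (0 < s < d k)%N then SAtom (zkey d k s) else SOne _.

(* Main.v *)
Require Import Defs.
From HB Require Import structures.
From mathcomp Require Import all_boot all_order all_algebra.
From mathcomp Require Import boolp.
From mathcomp Require Import ring.
Import Order.TTheory GRing.Theory Num.Theory.
Local Open Scope ring_scope.
Set Implicit Arguments. Unset Strict Implicit. Unset Printing Implicit Defensive.

Definition carT (P : semifield) : Type := sf_car P.
HB.instance Definition _ (P : semifield) := gen_eqMixin (carT P).
HB.instance Definition _ (P : semifield) := gen_choiceMixin (carT P).
HB.instance Definition _ (P : semifield) :=
  GRing.isZmodule.Build (carT P) (@sf_mulA P) (@sf_mulC P) (@sf_mul1 P) (@sf_mulV P).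

Lemma sfmulE (P : semifield) (a b : P) : sf_mul a b = (a : carT P) + (b : carT P).
Proof. by []. Qed.
Lemma sfoneE (P : semifield) : sf_one P = (0 : carT P).
Proof. by []. Qed.
Lemma sfinvE (P : semifield) (a : P) : sf_inv a = - (a : carT P).
Proof. by []. Qed.
Lemma sfpownE (P : semifield) (a : P) m : sf_pown a m = (a : carT P) *+ m.
Proof. elim: m => //= m ->. by rewrite mulrS. Qed.
Lemma sfpowzE (P : semifield) (a : P) k : sf_powz a k = (a : carT P) *~ k.
Proof.
case: k => [m|m]; first by rewrite /= sfpownE.
by rewrite /sf_powz sfinvE sfpownE NegzE mulrNz.
Qed.
Lemma sffoldrE (P : semifield) (T : Type) (f : T -> P) (s : seq T) :
  foldr (fun i acc => sf_mul (f i) acc) (sf_one P) s = \sum_(i <- s) (f i : carT P).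
Proof. elim: s => [|x s IH] /=; first by rewrite big_nil. by rewrite big_cons IH. Qed.
Lemma sfprodE (P : semifield) n (f : 'I_n -> P) :
  sf_prod f = \sum_(j < n) (f j : carT P).
Proof. by rewrite /sf_prod sffoldrE big_enum. Qed.
Definition ghom (O1 O2 : sfops) (h : O1 -> O2) :=
  [/\ forall a b, h (sf_mul a b) = sf_mul (h a) (h b),
      h (sf_one O1) = sf_one O2 & forall a, h (sf_inv a) = sf_inv (h a)].
Definition shom (O1 O2 : sfops) (h : O1 -> O2) :=
  ghom h /\ forall a b, h (sf_add a b) = sf_add (h a) (h b).

Lemma hom_pown (O1 O2 : sfops) (h : O1 -> O2) : ghom h -> forall a m, h (sf_pown a m) = sf_pown (h a) m.
Proof. move=> [hm h1 hi] a; elim=> //= m IH; by rewrite hm IH. Qed.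
Lemma hom_powz (O1 O2 : sfops) (h : O1 -> O2) : ghom h -> forall a k, h (sf_powz a k) = sf_powz (h a) k.
Proof. move=> H a [m|m]; rewrite /sf_powz; first exact: hom_pown. have [_ _ ->] := H; by rewrite (hom_pown H). Qed.
Lemma hom_foldr (O1 O2 : sfops) (h : O1 -> O2) (T : Type) (f : T -> O1) s : ghom h ->
  h (foldr (fun i acc => sf_mul (f i) acc) (sf_one O1) s) =
  foldr (fun i acc => sf_mul (h (f i)) acc) (sf_one O2) s.
Proof. move=> [hm h1 hi]; elim: s => //= x s IH; by rewrite hm IH. Qed.
Lemma hom_prod (O1 O2 : sfops) (h : O1 -> O2) n (f : 'I_n -> O1) : ghom h ->
  h (sf_prod f) = sf_prod (fun j => h (f j)).
Proof. exact: hom_foldr. Qed.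
Lemma hom_tm (O1 O2 : sfops) (h : O1 -> O2) n (d : 'I_n -> nat) (val : var d -> O1) c : ghom h ->
  h (trop_mono val c) = trop_mono (fun v => h (val v)) c.
Proof. move=> H; rewrite /trop_mono (hom_foldr _ _ H); congr foldr; apply: funext => v.
by apply: funext => acc; rewrite (hom_powz H). Qed.
Lemma hom_bigadd (O1 O2 : sfops) (h : O1 -> O2) (f : nat -> O1) m : shom h ->
  h (sf_bigadd f m) = sf_bigadd (fun s => h (f s)) m.
Proof.
move=> [_ ha]; rewrite /sf_bigadd; move: (f 0%N) => a.
elim: (iota 1 m) a => //= x s IH a; by rewrite IH ha.
Qed.
Lemma hom_mutY (O1 O2 : sfops) (h : O1 -> O2) n (d : 'I_n -> nat) z k B y : shom h ->
  (fun i => h (mutY d z k B y i)) = mutY d (fun k s => h (z k s)) k B (fun i => h (y i)).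
Proof.
move=> H; apply: funext => i; rewrite /mutY; case: eqP => _.
  by case: H => -[_ _ ->].
have [[hm _ _] _] := H.
rewrite !hm !(hom_pown H.1) !(hom_powz H.1) (hom_bigadd _ _ H); congr sf_mul.
congr sf_powz; congr sf_bigadd; apply: funext => s; by rewrite hm (hom_pown H.1).
Qed.
Lemma hom_ypattern (O1 O2 : sfops) (h : O1 -> O2) n (d : 'I_n -> nat) z y B w : shom h ->
  ypattern (O := O2) d (fun k s => h (z k s)) (fun i => h (y i)) B w =
  ((fun i => h ((ypattern d z y B w).1 i)), (ypattern d z y B w).2).
Proof.
move=> H; elim: w y B => [|k w IH] y B //=.
rewrite /ypattern /= -(hom_mutY _ _ _ _ _ H). exact: IH.
Qed.
Lemma hom_eval (A : Type) (O1 O2 : sfops) (h : O1 -> O2) (g : A -> O1) e : shom h ->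
  h (sf_eval g e) = sf_eval (fun a => h (g a)) e.
Proof.
move=> [[hm h1 hi] ha]; elim: e => //= [e1 IH1 e2 IH2|e IH|e1 IH1 e2 IH2];
by rewrite ?hm ?hi ?ha ?IH ?IH1 ?IH2.
Qed.
Lemma eval_shom (A : Type) (O : sfops) (g : A -> O) :
  shom (O1 := exprOps A) (sf_eval g).
Proof. by []. Qed.

Lemma tm_sum (P : semifield) n (d : 'I_n -> nat) (val : var d -> P) (c : trop d) :
  trop_mono val c = \sum_(v : var d) (val v : carT P) *~ c v.
Proof.
rewrite /trop_mono (sffoldrE (fun v => sf_powz (val v) (c v))) big_enum.
by apply: eq_bigr => v _; rewrite sfpowzE.
Qed.

Lemma tm_ghom (P : semifield) n (d : 'I_n -> nat) (val : var d -> P) :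
  ghom (O1 := tropOps d) (trop_mono val).
Proof.
split.
- move=> a b; rewrite sfmulE !tm_sum -big_split /=; apply: eq_bigr => v _.
  by rewrite ffunE mulrzDr.
- by rewrite tm_sum sfoneE big1 // => v _; rewrite ffunE.
- move=> a; rewrite sfinvE !tm_sum -sumrN; apply: eq_bigr => v _.
  by rewrite /= ffunE mulrNz.
Qed.

Lemma tm_ind (P : semifield) n (d : 'I_n -> nat) (val : var d -> P) u :
  trop_mono val [ffun v => if v == u then 1 else 0] = val u.
Proof.
rewrite tm_sum (bigD1 u) //= big1 ?addr0 ?ffunE ?eqxx //.
by move=> v /negbTE; rewrite ffunE => ->.
Qed.

Lemma tm_zero (P : semifield) n (d : 'I_n -> nat) (val : var d -> P) :
  trop_mono val [ffun=> 0] = sf_one P.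
Proof. by rewrite tm_sum sfoneE big1 // => v _; rewrite ffunE. Qed.

Lemma trop_mulE n (d : 'I_n -> nat) (a b : tropOps d) v :
  (sf_mul a b : trop d) v = a v + b v.
Proof. by rewrite /= ffunE. Qed.
Lemma trop_invE n (d : 'I_n -> nat) (a : tropOps d) v :
  (sf_inv a : trop d) v = - a v.
Proof. by rewrite /= ffunE. Qed.
Lemma trop_pownE n (d : 'I_n -> nat) (a : tropOps d) m v :
  (sf_pown a m : trop d) v = a v *+ m.
Proof. elim: m => [|m IH] /=; rewrite ffunE //. by rewrite IH mulrS. Qed.
Lemma trop_powzE n (d : 'I_n -> nat) (a : tropOps d) k v :
  (sf_powz a k : trop d) v = a v *~ k.
Proof.
case: k => m; rewrite /sf_powz; first by rewrite trop_pownE.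
by rewrite trop_invE trop_pownE NegzE mulrNz.
Qed.
Lemma trop_bigadd0 n (d : 'I_n -> nat) (f : nat -> tropOps d) m v :
  (f 0%N : trop d) v = 0 -> (forall s, 0 <= (f s : trop d) v) ->
  (sf_bigadd f m : trop d) v = 0.
Proof.
move=> h0 hpos; rewrite /sf_bigadd; move: (f 0%N) h0 => a.
elim: (iota 1 m) a => //= x s IH a ha; apply: IH.
by rewrite ffunE ha; apply/min_idPl; apply: hpos.
Qed.

Definition Bw n (d : 'I_n -> nat) (B : 'M[int]_n) (w : seq 'I_n) :=
  foldl (fun B k => mutB d k B) B w.

Lemma ypattern_B (O : sfops) n (d : 'I_n -> nat) z (y : 'I_n -> O) B w :
  (ypattern d z y B w).2 = Bw d B w.
Proof. by elim: w y B => [|k w IH] y B //=; rewrite /ypattern /= IH. Qed.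

Definition prstep n (d : 'I_n -> nat) (s : prseed d) (k : 'I_n) : prseed d :=
  let: (X, Y, Bt) := s in
  (pr_mutX k Bt Y X, mutY (O := tropOps d) d (trop_z d) k Bt Y, mutB d k Bt).

Lemma prpatternE n (d : 'I_n -> nat) B w :
  prpattern d B w = foldl (@prstep n d) ((fun i => SAtom (inl i)), (fun i => trop_y d i), B) w.
Proof. by []. Qed.

Lemma prfold_B n (d : 'I_n -> nat) w (s : prseed d) :
  (foldl (@prstep n d) s w).2 = Bw d s.2 w.
Proof. by elim: w s => [|k w IH] [[X Y] Bt] //=. Qed.

Lemma prpattern_B n (d : 'I_n -> nat) B w : (prpattern d B w).2 = Bw d B w.
Proof. by rewrite prpatternE prfold_B. Qed.

Lemma bplusM (c x : int) : 0 < c -> bplus (c * x) = c * bplus x.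
Proof.
move=> hc; rewrite /bplus pmulr_rge0 //; by case: ifP => _; rewrite ?mulr0.
Qed.
Lemma skew_mutB n (d : 'I_n -> nat) (B : 'M[int]_n) k :
  skew_symmetrizable B -> skew_symmetrizable (mutB d k B).
Proof.
move=> [D [hD hB]]; exists D; split => // i j; rewrite !mxE.
have hpos l : 0 < (D l)%:Z by rewrite ltz_nat.
have key l : (D l)%:Z * bplus (- B l k) = (D k)%:Z * bplus (B k l).
  by rewrite -bplusM // mulrN hB opprK bplusM.
case: (boolP ((i == k) || (j == k))) => hij.
  have -> : (j == k) || (i == k) by rewrite orbC.
  by rewrite !mulrN hB.
have -> : (j == k) || (i == k) = false by rewrite orbC (negbTE hij).
set dk := (d k)%:Z.
have e1 : (D i)%:Z * (B i j + dk * (bplus (- B i k) * B k j + B i k * bplus (B k j)))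
  = (D i)%:Z * B i j + dk * (((D i)%:Z * bplus (- B i k)) * B k j
      + ((D i)%:Z * B i k) * bplus (B k j)) by ring.
have e2 : (D j)%:Z * (B j i + dk * (bplus (- B j k) * B k i + B j k * bplus (B k i)))
  = (D j)%:Z * B j i + dk * (((D j)%:Z * bplus (- B j k)) * B k i
      + ((D j)%:Z * B j k) * bplus (B k i)) by ring.
rewrite e1 e2 !key (hB i k) (hB j k) (hB i j); ring.
Qed.

Lemma skew_diag n (B : 'M[int]_n) i : skew_symmetrizable B -> B i i = 0.
Proof.
move=> [D [hD hB]]; have := hB i i.
have hp : (D i)%:Z != 0 by rewrite eqz_nat -lt0n hD.
move/eqP; rewrite -subr_eq0 opprK -mulr2n -mulr_natr -mulrA mulf_eq0 (negbTE hp) /= mulf_eq0 orbF.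
by move/eqP.
Qed.

Lemma skew_Bw n (d : 'I_n -> nat) B w :
  skew_symmetrizable B -> skew_symmetrizable (Bw d B w).
Proof. by elim: w B => [|k w IH] B //= hB; apply: IH; apply: skew_mutB. Qed.

Definition phiF (P : semifield) n (d : 'I_n -> nat) (val : var d -> P) (a : patom d) : P :=
  match a with inl _ => sf_one P | inr c => trop_mono val c end.

Lemma FevalE (P : semifield) n (d : 'I_n -> nat) (val : var d -> P) B w j :
  Feval val (Fpoly d B w j) = sf_eval (phiF val) ((prpattern d B w).1.1 j).
Proof.
rewrite /Feval /Fpoly (hom_eval _ _ (eval_shom _)); congr sf_eval.
by apply: funext => -[a|c].
Qed.

Lemma Fe_mutX (P : semifield) n (d : 'I_n -> nat) (val : var d -> P) k Bt
   (Y : 'I_n -> trop d) X j :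
  sf_eval (phiF val) (pr_mutX k Bt Y X j) = if j == k then
    sf_mul (sf_mul (sf_mul (sf_inv (sf_eval (phiF val) (X k)))
      (sf_pown (sf_prod (fun j => sf_powz (sf_eval (phiF val) (X j)) (bplus (- Bt j k)))) (d k)))
      (sf_bigadd (fun s => sf_mul (trop_mono val (trop_z d k s))
          (sf_pown (sf_mul (trop_mono val (Y k))
             (sf_prod (fun j => sf_powz (sf_eval (phiF val) (X j)) (Bt j k)))) s)) (d k)))
    (sf_inv (trop_mono val (sf_bigadd (O := tropOps d)
         (fun s => sf_mul (trop_z d k s) (sf_pown (Y k : tropOps d) s)) (d k))))
  else sf_eval (phiF val) (X j).
Proof.
have H := eval_shom (phiF val).
rewrite /pr_mutX; case: eqP => // _ /=.
rewrite (hom_pown H.1) (hom_prod _ H.1) (hom_bigadd _ _ H).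
congr (sf_mul (sf_mul _ _) _).
- congr (sf_mul _ (sf_pown (sf_prod _) _)); apply: funext => j'; by rewrite (hom_powz H.1).
- congr sf_bigadd; apply: funext => s /=; rewrite (hom_pown H.1) /=.
  rewrite (hom_prod _ H.1); congr (sf_mul _ (sf_pown (sf_mul _ (sf_prod _)) _)).
  apply: funext => j'; by rewrite (hom_powz H.1).
Qed.

Lemma foldl_ext_in (O : sfops) (f g : nat -> O) l a :
  {in l, f =1 g} ->
  foldl (fun acc s => sf_add acc (f s)) a l = foldl (fun acc s => sf_add acc (g s)) a l.
Proof.
elim: l a => //= x l IH a h; rewrite h ?mem_head //; apply: IH => y hy.
by apply: h; rewrite in_cons hy orbT.
Qed.

Lemma bigadd_ext (O : sfops) (f g : nat -> O) m :
  (forall s, (s <= m)%N -> f s = g s) -> sf_bigadd f m = sf_bigadd g m.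
Proof.
move=> h; rewrite /sf_bigadd h // ; apply: foldl_ext_in => s; rewrite mem_iota.
by move=> /andP [_ hs]; apply: h; rewrite -ltnS -(add1n m).
Qed.
Lemma mulrnz (V : zmodType) (x : V) (m : nat) : x *+ m = x *~ m%:Z.
Proof. by []. Qed.

Lemma sum_lin (V : zmodType) n (F : 'I_n -> V) (e : 'I_n -> int) (c : int) :
  (\sum_j F j *~ e j) *~ c = \sum_j F j *~ (e j * c).
Proof. rewrite mulrz_suml; apply: eq_bigr => j _; by rewrite mulrzA. Qed.

Lemma alg_core (V : zmodType) n (F : 'I_n -> V) (Bt : 'M[int]_n) (k i : 'I_n) (dk : nat)
    (mYi mYk mT S : V) :
  i != k -> Bt k k = 0 ->
  (mYi + \sum_j F j *~ Bt j i) + (mYk + \sum_j F j *~ Bt j k) *~ bplus (Bt k i) *+ dk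
     + S *~ - Bt k i =
  mYi + mYk *~ bplus (Bt k i) *+ dk + mT *~ - Bt k i +
  ((- F k + (\sum_j F j *~ bplus (- Bt j k)) *+ dk + S - mT) *~ (- Bt k i) +
   \sum_(j < n | j != k) F j *~ (Bt j i + dk%:Z * (bplus (- Bt j k) * Bt k i
                                   + Bt j k * bplus (Bt k i)))).
Proof.
move=> hik hkk.
set b := Bt k i; set p := bplus b.
rewrite !mulrnz !mulrzDl !sum_lin mulNrz.
set S1 := \sum_j F j *~ Bt j i.
set S2 := \sum_j F j *~ (Bt j k * p * dk).
set S3 := \sum_j F j *~ (bplus (- Bt j k) * dk * - b).
set S4 := \sum_(j < n | j != k) _.
have E : S1 + S2 = - (F k *~ - b) + S3 + S4.
  have -> : S1 + S2 = \sum_j F j *~ (Bt j i + Bt j k * p * dk).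
    by rewrite /S1 /S2 -big_split; apply: eq_bigr => j _; rewrite mulrzDr.
  rewrite mulrNz opprK addrAC.
  have -> : F k *~ b + S4 = \sum_j F j *~ (if j == k then b
       else Bt j i + dk%:Z * (bplus (- Bt j k) * b + Bt j k * p)).
    rewrite [RHS](bigD1 k) //= eqxx; congr (_ + _); apply: eq_bigr => j /negbTE -> //.
  rewrite /S3 -big_split /=; apply: eq_bigr => j _; rewrite -mulrzDr; congr (_ *~ _).
  case: eqP => [->|_]; last by ring.
  rewrite hkk oppr0 /bplus lexx /b; ring.
rewrite -!addrA; congr (mYi + _); rewrite addrCA; congr (_ + _).
rewrite addrA E mulNrz -!addrA [RHS]addrCA; congr (_ + _).
rewrite [RHS]addrCA; congr (_ + _).
by rewrite [RHS]addrCA addNKr addrC.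
Qed.
Lemma main_P (P : semifield) n (d : 'I_n -> nat) (B : 'M[int]_n) (val : var d -> P)
    (z : 'I_n -> nat -> P) :
  skew_symmetrizable B ->
  (forall k s, (s <= d k)%N -> trop_mono val (trop_z d k s) = z k s) ->
  forall w i, (ypattern d z (fun j => val (inl j)) B w).1 i =
   sf_mul (trop_mono val ((prpattern d B w).1.2 i))
          (sf_prod (fun j => sf_powz (Feval val (Fpoly d B w j)) (Bw d B w j i))).
Proof.
move=> hskew hz w; elim/last_ind: w => [|w k IH] i.
  rewrite /= /trop_y tm_ind sfmulE sfprodE big1 ?addr0 // => j _.
  by rewrite FevalE /= sfpowzE mul0rz.
have hskw := skew_Bw d w hskew.
have IH' : forall i, ((ypattern d z (fun j => val (inl j)) B w).1 i : carT P) =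
   (trop_mono val ((prpattern d B w).1.2 i) : carT P) +
   \sum_j (sf_eval (phiF val) ((prpattern d B w).1.1 j) : carT P) *~ Bw d B w j i.
  move=> i'; rewrite IH sfmulE sfprodE; congr (_ + _); apply: eq_bigr => j _.
  by rewrite FevalE sfpowzE.
rewrite sfmulE sfprodE.
under eq_bigr do rewrite FevalE sfpowzE.
rewrite /ypattern foldl_rcons -/(ypattern _ _ _ _ w) /Bw foldl_rcons -/(Bw d B w).
rewrite prpatternE foldl_rcons -prpatternE.
rewrite (ypattern_B d z _ B w).
move: IH' hskw; rewrite -(prpattern_B d B w).
move: (ypattern d z (fun j => val (inl j)) B w).1 => yp.
case: (prpattern d B w) => [[X Y] Bt] /= IH' hskw; clear IH.
have hkk : Bt k k = 0 := skew_diag k hskw.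
have [tmM tm1 tmV] := tm_ghom val.
set F := fun j => sf_eval (phiF val) (X j).
have FeE j : j != k -> sf_eval (phiF val) (pr_mutX k Bt Y X j) = F j.
  by move=> hj; rewrite Fe_mutX (negbTE hj).
rewrite /mutY; case: (eqVneq i k) => [->|hik].
  rewrite tmV !sfinvE IH' opprD -sumrN.
  f_equal; apply: eq_bigr => j _.
  rewrite /mutB mxE eqxx orbT -mulrNz; case: (eqVneq j k) => [->|hjk]; first by rewrite hkk !oppr0 !mulr0z.
  by rewrite FeE.
set T := sf_bigadd (O := tropOps d) _ (d k).
set S := sf_bigadd (fun s => sf_mul (z k s) (sf_pown (yp k) s)) (d k).
rewrite !tmM (hom_pown (tm_ghom val)) (hom_powz (tm_ghom val)) (hom_powz (tm_ghom val)).
rewrite (bigD1 k) //= Fe_mutX eqxx.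
have -> : sf_bigadd (fun s => sf_mul (trop_mono val (trop_z d k s))
          (sf_pown (sf_mul (trop_mono val (Y k))
             (sf_prod (fun j => sf_powz (sf_eval (phiF val) (X j)) (Bt j k)))) s)) (d k) = S.
  apply: bigadd_ext => s hs; rewrite hz //; congr (sf_mul _ (sf_pown _ s)).
  rewrite IH' sfmulE sfprodE; f_equal; apply: eq_bigr => j _; by rewrite sfpowzE.
rewrite !sfmulE !sfpownE !sfpowzE !sfinvE sfprodE.
have -> : \sum_(j < n) (sf_powz (sf_eval (phiF val) (X j)) (bplus (- Bt j k)) : carT P)
  = \sum_(j < n) (sf_eval (phiF val) (X j) : carT P) *~ bplus (- Bt j k).
  by apply: eq_bigr => j _; rewrite sfpowzE.
have -> : \sum_(j < n | j != k) (sf_eval (phiF val) (pr_mutX k Bt Y X j) : carT P) *~ mutB d k Bt j i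
   = \sum_(j < n | j != k) (sf_eval (phiF val) (X j) : carT P) *~
        (Bt j i + (d k)%:Z * (bplus (- Bt j k) * Bt k i + Bt j k * bplus (Bt k i))).
  by apply: eq_bigr => j hj; rewrite FeE // /mutB mxE (negbTE hj) (negbTE hik).
rewrite /mutB mxE eqxx /= !IH'.
exact: (@alg_core (carT P) n (fun j => sf_eval (phiF val) (X j)) Bt k i (d k) _ _ (trop_mono val T) _ hik hkk).
Qed.
Lemma trop_z_ge0 n (d : 'I_n -> nat) k s v : 0 <= (trop_z d k s : trop d) v.
Proof. rewrite /trop_z; case: ifP => _; rewrite ffunE //; by case: eqP. Qed.

Lemma Yz0 n (d : 'I_n -> nat) B w i p : (prpattern d B w).1.2 i (inr p) = 0.
Proof.
elim/last_ind: w i => [|w k IH] i.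
  by rewrite /= /trop_y ffunE.
rewrite prpatternE foldl_rcons -prpatternE.
move: IH; case: (prpattern d B w) => [[X Y] Bt] /= IH.
rewrite /mutY; case: eqP => _; first by rewrite trop_invE IH oppr0.
rewrite !trop_mulE trop_pownE trop_powzE !IH mul0rz mul0rn add0r.
rewrite trop_powzE trop_bigadd0 ?mul0rz //.
- by rewrite trop_mulE /trop_z /= ffunE.
- move=> s; rewrite trop_mulE trop_pownE IH mul0rn addr0; exact: trop_z_ge0.
Qed.

Lemma tm_prod (P : semifield) n (d : 'I_n -> nat) (val : var d -> P) (c : trop d) :
  (forall p, c (inr p) = 0) ->
  trop_mono val c = sf_prod (fun j => sf_powz (val (inl j)) (c (inl j))).
Proof.
move=> h; rewrite tm_sum sfprodE big_sumType /= [X in _ + X]big1 ?addr0.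
  by apply: eq_bigr => j _; rewrite sfpowzE.
by move=> p _; rewrite h.
Qed.
Definition posT := {q : rat | 0 < q}.
Lemma pos_inv_gt0 (a : posT) : 0 < (sval a)^-1.
Proof. by rewrite invr_gt0 (proj2_sig a). Qed.
Definition pos_mul (a b : posT) : posT :=
  exist _ (sval a * sval b) (mulr_gt0 (proj2_sig a) (proj2_sig b)).
Definition pos_add (a b : posT) : posT :=
  exist _ (sval a + sval b) (addr_gt0 (proj2_sig a) (proj2_sig b)).
Definition pos_one : posT := exist _ 1 ltr01.
Definition pos_inv (a : posT) : posT := exist _ (sval a)^-1 (pos_inv_gt0 a).
Definition posOps : sfops := @SFOps posT pos_mul pos_one pos_inv pos_add.
Lemma pos_eq (a b : posT) : sval a = sval b -> a = b.
Proof. by move=> h; apply: val_inj. Qed.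
Definition Ppos : semifield.
Proof.
refine (@Semifield posOps _ _ _ _ _ _ _) => *; apply: pos_eq => /=.
- exact: mulrA.
- exact: mulrC.
- exact: mul1r.
- match goal with |- _ * sval ?a = _ => apply: mulVf; exact: (lt0r_neq0 (proj2_sig a)) end.
- exact: addrA.
- exact: addrC.
- exact: mulrDl.
Defined.

Lemma sval_shom : shom (O1 := Ppos) (O2 := ratOps) (fun q : posT => sval q).
Proof. by []. Qed.
Theorem mainTheorem17 (n : nat) (d : 'I_n -> nat) (B : 'M[int]_n) :
  skew_symmetrizable B -> (forall i, (0 < d i)%N) ->
  (forall (P : semifield) (y : 'I_n -> P) (z : 'I_n -> nat -> P),
     (forall i, z i 0%N = sf_one P /\ z i (d i) = sf_one P /\
                forall s, (s <= d i)%N -> z i s = z i (d i - s)%N) ->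
     forall (w : seq 'I_n), reduced_word w -> forall i : 'I_n,
       (ypattern d z y B w).1 i =
       sf_mul (sf_prod (fun j => sf_powz (y j) (Cmat d B w j i)))
              (sf_prod (fun j => sf_powz (Feval (Pval y z) (Fpoly d B w j))
                                         ((ypattern d z y B w).2 j i))))
  /\
  (forall (w : seq 'I_n), reduced_word w -> forall i : 'I_n,
     sf_equiv
       ((ypattern (O := exprOps (var d)) d (ugen_z d) (fun j => SAtom (inl j)) B w).1 i)
       (sf_mul (s := exprOps (var d))
          (sf_prod (fun j => sf_powz (O := exprOps (var d)) (SAtom (inl j)) (Cmat d B w j i)))
          (sf_prod (fun j => sf_powz (O := exprOps (var d))
                      (Feval (P := exprOps (var d)) (fun v => SAtom v) (Fpoly d B w j))
                      ((ypattern (O := exprOps (var d)) d (ugen_z d)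
                          (fun j => SAtom (inl j)) B w).2 j i))))).
Proof.
move=> hskew hd; split.
  move=> P y z hz w _ i.
  have hz' : forall k s, (s <= d k)%N -> trop_mono (Pval y z) (trop_z d k s) = z k s.
    move=> k s hs; have [hz0 [hzd hzs]] := hz k.
    rewrite /trop_z; case: ifP => h.
      rewrite tm_ind /= inordK; last first.
        rewrite ltnS; apply: leq_trans (geq_minl _ _) _; apply: leq_trans hs _.
        exact: (leq_bigmax (F := d)).
      rewrite /minn; case: ifP => _ //; by rewrite -hzs.
    rewrite tm_zero; move/negbT: h; rewrite negb_and -leqNgt -ltnNge.
    case/orP => h; first by move: h; rewrite leqn0 => /eqP ->.
    by have -> : s = d k by apply/eqP; rewrite eqn_leq hs; exact: h.
  rewrite [LHS](main_P hskew hz' w i) ypattern_B (tm_prod _ (@Yz0 n d B w i)).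
  by [].
move=> w _ i v hv.
pose vp : var d -> Ppos := fun a => exist _ (v a) (hv a).
have Ev e : sf_eval (O := ratOps) v e = sval (sf_eval (O := Ppos) vp e).
  by rewrite (hom_eval _ _ sval_shom).
rewrite !Ev; congr sval.
have H := eval_shom (O := Ppos) vp.
have := f_equal (fun p => p.1 i) (@hom_ypattern _ _ _ n d (ugen_z d) (fun j => SAtom (inl j)) B w H).
move=> /= <-.
have hz' : forall k s, (s <= d k)%N ->
   trop_mono vp (trop_z d k s) = sf_eval vp (ugen_z d k s).
  move=> k s _; rewrite /trop_z /ugen_z; case: ifP => _; first by rewrite tm_ind.
  by rewrite tm_zero.
rewrite (main_P hskew hz' w i) (@ypattern_B (exprOps (var d)) n d) (tm_prod _ (@Yz0 n d B w i)) /=.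
rewrite !(hom_prod _ H.1); congr pos_mul.
  by f_equal; apply: funext => j; rewrite (hom_powz H.1).
f_equal; apply: funext => j; rewrite (hom_powz H.1); f_equal.
rewrite /Feval (hom_eval _ _ H); f_equal; apply: funext => c.
by rewrite (hom_tm _ _ H.1).
Qed.
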